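(* Let $\Phi$ be a homogeneous $\Sigma\Pi\Sigma$ circuit over a set of variables $X$ and a field $\mathbb{F}$, with top fan-in $k$, computing a homogeneous polynomial $f$ of degree $d$. Then for any partition $A:X\to Y\cup Z$, $\mathrm{maxrank}(M_{\Phi^A})\le k\cdot 2^d$.
   Context: A $\Sigma\Pi\Sigma$ circuit computes $\sum_{i=1}^k\prod_{j=1}^{\deg(P_i)}l_{i,j}$ (a top plus gate of fan-in $k$ over product gates $P_i$ whose inputs are outputs $l_{i,j}$ of bottom plus gates); it is homogeneous if every $l_{i,j}$ is a homogeneous linear form. $Y,Z$ are disjoint sets of variables and a partition is a map $A:X\to Y\cup Z$; $\Phi^A$ is the circuit obtained by replacing every variable $x$ by $A(x)$, and $M_{\Phi^A}$ is the polynomial coefficient matrix of the polynomial it computes (namely $f^A$). For $g\in\mathbb{F}[Y,Z]$, $M_g$ has rows indexed by monic multilinear monomials $p$ in $Y$ and columns by monic multilinear monomials $q$ in $Z$, with $M_g(p,q)=G$ iff $g=pq\,G+Q$ uniquely with $G$ containing only variables present in $p,q$ and $Q$ having no monomial divisible by $pq$ that contains only variables present in $p,q$. $\mathrm{maxrank}(M_g)=\max_{S:Y\cup Z\to\mathbb{F}}\mathrm{rank}(M_g|_S)$, where $M_g|_S$ evaluates entries at $S$. *)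

(* Defs.v *)
From HB Require Import structures.
From mathcomp Require Import all_boot all_order all_algebra.
From mathcomp Require Export mpoly.
Set Implicit Arguments. Unset Strict Implicit. Unset Printing Implicit Defensive.
Import GRing.Theory.
Local Open Scope ring_scope.

(* A bottom plus gate over variables 'I_n: constant term and coefficients,
   computing  c0 + sum_x c_x * x. *)
Definition linform (F : fieldType) (n : nat) := (F * {ffun 'I_n -> F})%type.

(* A SigmaPiSigma circuit: the top plus gate has fan-in (size Phi);
   each entry is a product gate P_i given as the list of its input linear
   forms l_{i,1}, ..., l_{i,deg P_i}. *)
Definition circuit (F : fieldType) (n : nat) := seq (seq (linform F n)).

Definition topfanin F n (Phi : circuit F n) : nat := size Phi.

Definition lin_poly F n (l : linform F n) : {mpoly F[n]} :=
  l.1%:MP + \sum_(x < n) l.2 x *: 'X_x.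

Definition circuit_poly F n (Phi : circuit F n) : {mpoly F[n]} :=
  \sum_(P <- Phi) \prod_(l <- P) lin_poly l.

Definition homogeneous_circuit F n (Phi : circuit F n) : bool :=
  all (all (fun l : linform F n => l.1 == 0)) Phi.

(* Phi^A : replace every variable x by A x (variables Y u Z = 'I_(p+q),
   Y = left part 'I_p, Z = right part 'I_q). *)
Definition subst_circuit F n m (A : 'I_n -> 'I_m) (Phi : circuit F n)
  : circuit F m :=
  map (map (fun l : linform F n =>
     (l.1, [ffun y : 'I_m => \sum_(x < n | A x == y) l.2 x]))) Phi.

Definition varsYZ p q (S : {set 'I_p}) (T : {set 'I_q}) : {set 'I_(p + q)} :=
  [set lshift q i | i in S] :|: [set rshift p j | j in T].

(* M_g(S,T) for the monic multilinear monomials prod S (in Y) and prod T (in Z):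
   the unique G with g = (prod S)(prod T) G + Q, G only in variables of S u T,
   Q with no monomial divisible by (prod S)(prod T) using only those variables.
   Explicitly: the monomials of g whose variable set is exactly U = S u T,
   each divided by prod U. *)
Definition Mentry F p q (g : {mpoly F[p + q]}) (S : {set 'I_p}) (T : {set 'I_q})
  : {mpoly F[p + q]} :=
  let U := varsYZ S T in
  \sum_(m <- msupp g | [forall i, (m i != 0%N) == (i \in U)])
     g@_m *: 'X_[[multinom (m i).-1 | i < p + q]].

Definition coefmx F p q (g : {mpoly F[p + q]})
  : 'M[{mpoly F[p + q]}]_(#|{set 'I_p}|, #|{set 'I_q}|) :=
  \matrix_(i, j) Mentry g (enum_val i) (enum_val j).

Definition coefmx_eval F p q (g : {mpoly F[p + q]}) (s : 'I_(p + q) -> F)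
  : 'M[F]_(#|{set 'I_p}|, #|{set 'I_q}|) :=
  map_mx (fun G => G.@[s]) (coefmx g).

(* Main.v *)
Require Import Defs.
From mathcomp Require Import all_boot all_order all_algebra.
From mathcomp Require Import mpoly ssrcomplements.
Set Implicit Arguments. Unset Strict Implicit. Unset Printing Implicit Defensive.
Import GRing.Theory.
Local Open Scope ring_scope.

Section Lin.
Variables (F : fieldType) (p q : nat) (s : 'I_(p + q) -> F).
Local Notation a := #|{set 'I_p}|.
Local Notation b := #|{set 'I_q}|.

Definition wt (m : 'X_{1..p + q}) : 'M[F]_(a, b) :=
  \matrix_(i, j) (if [forall x, (m x != 0%N) == (x \in varsYZ (enum_val i) (enum_val j))]
    then ('X_[[multinom (m x).-1 | x < p + q]] : {mpoly F[p + q]}).@[s] else 0).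

Definition Lmx (g : {mpoly F[p + q]}) := \sum_(m <- msupp g) g@_m *: wt m.

Lemma coefmx_evalE g : coefmx_eval g s = Lmx g.
Proof.
apply/matrixP => i j; rewrite !mxE summxE /Mentry raddf_sum /= big_mkcond /=.
apply: eq_bigr => m _; rewrite !mxE; case: ifP => _; last by rewrite mulr0.
by rewrite mevalZ.
Qed.

Lemma LmxE g k : (msize g <= k)%N -> Lmx g = \sum_(m : 'X_{1..(p + q) < k}) g@_m *: wt m.
Proof.
move=> le_gk; set I : subFinType _ := 'X_{1..(p + q) < k}.
rewrite /Lmx (big_mksub I) ?msupp_uniq //=; first last.
  by move=> x /msize_mdeg_lt /leq_trans; apply.
rewrite big_rmcond //= => j /memN_msupp_eq0 ->.
by rewrite scale0r.
Qed.

Lemma LmxD g h : Lmx (g + h) = Lmx g + Lmx h.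
Proof.
pose k := (msize g + msize h + msize (g + h))%N.
have h1 : (msize g <= k)%N by rewrite /k -addnA leq_addr.
have h2 : (msize h <= k)%N by rewrite /k addnAC leq_addl.
have h3 : (msize (g + h) <= k)%N by rewrite /k leq_addl.
rewrite !(@LmxE _ k) //.
by rewrite -big_split /=; apply: eq_bigr => m _; rewrite mcoeffD scalerDl.
Qed.

Lemma LmxZ c g : Lmx (c *: g) = c *: Lmx g.
Proof.
pose k := (msize g + msize (c *: g))%N.
have h1 : (msize g <= k)%N by rewrite /k leq_addr.
have h2 : (msize (c *: g) <= k)%N by rewrite /k leq_addl.
rewrite !(@LmxE _ k) //.
by rewrite scaler_sumr; apply: eq_bigr => m _; rewrite mcoeffZ scalerA.
Qed.

Lemma Lmx0 : Lmx 0 = 0.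
Proof. by rewrite /Lmx msupp0 big_nil. Qed.

Lemma Lmx_sum (I : Type) (r : seq I) P (G : I -> {mpoly F[p + q]}) :
  Lmx (\sum_(i <- r | P i) G i) = \sum_(i <- r | P i) Lmx (G i).
Proof. by apply: (big_morph Lmx LmxD Lmx0). Qed.

Lemma LmxX m : Lmx 'X_[m] = wt m.
Proof. by rewrite /Lmx msuppX big_seq1 mcoeffX eqxx scale1r. Qed.

End Lin.

Section Split.
Variables (F : fieldType) (p q : nat) (s : 'I_(p + q) -> F).
Local Notation a := #|{set 'I_p}|.
Local Notation b := #|{set 'I_q}|.

Definition mY (m : 'X_{1..p + q}) := [forall j : 'I_q, m (rshift p j) == 0%N].
Definition mZ (m : 'X_{1..p + q}) := [forall i : 'I_p, m (lshift q i) == 0%N].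

Lemma mem_varsYZ_l (S : {set 'I_p}) (T : {set 'I_q}) x :
  (lshift q x \in varsYZ S T) = (x \in S).
Proof.
rewrite /varsYZ in_setU (mem_imset _ _ (@lshift_inj p q)).
have -> : (lshift q x \in [set rshift p j | j in T]) = false.
  by apply/imsetP => -[y _ /eqP]; rewrite eq_lrshift.
by rewrite orbF.
Qed.

Lemma mem_varsYZ_r (S : {set 'I_p}) (T : {set 'I_q}) x :
  (rshift p x \in varsYZ S T) = (x \in T).
Proof.
rewrite /varsYZ in_setU (mem_imset _ _ (@rshift_inj p q)).
have -> : (rshift p x \in [set lshift q j | j in S]) = false.
  by apply/imsetP => -[y _ /eqP]; rewrite eq_rlshift.
by [].
Qed.

Definition uY (m : 'X_{1..p + q}) : 'M[F]_(a, 1) :=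
  \col_i (if [forall x : 'I_p, (m (lshift q x) != 0%N) == (x \in (enum_val i : {set 'I_p}))]
          then \prod_(x < p) s (lshift q x) ^+ (m (lshift q x)).-1 else 0).
Definition vZ (m : 'X_{1..p + q}) : 'M[F]_(1, b) :=
  \row_j (if [forall y : 'I_q, (m (rshift p y) != 0%N) == (y \in (enum_val j : {set 'I_q}))]
          then \prod_(y < q) s (rshift p y) ^+ (m (rshift p y)).-1 else 0).

Lemma wt_split m1 m2 : mY m1 -> mZ m2 -> wt s (m1 + m2) = uY m1 *m vZ m2.
Proof.
move=> /forallP h1 /forallP h2.
apply/matrixP => i j; rewrite !mxE big_ord1 !mxE.
have eL x : (m1 + m2)%MM (lshift q x) = m1 (lshift q x).
  by rewrite mnmDE (eqP (h2 x)) addn0.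
have eR y : (m1 + m2)%MM (rshift p y) = m2 (rshift p y).
  by rewrite mnmDE (eqP (h1 y)).
set A := [forall x : 'I_p, _]; set B := [forall y : 'I_q, _].
have -> : [forall x, ((m1 + m2)%MM x != 0%N) == (x \in varsYZ (enum_val i) (enum_val j))]
    = A && B.
  apply/forallP/andP => [H|[/forallP HA /forallP HB] x].
    split; apply/forallP => x.
      by move: (H (lshift q x)); rewrite eL mem_varsYZ_l.
    by move: (H (rshift p x)); rewrite eR mem_varsYZ_r.
  case: (split_ordP x) => y ->; first by rewrite eL mem_varsYZ_l.
  by rewrite eR mem_varsYZ_r.
have -> : ('X_[[multinom ((m1 + m2)%MM x).-1 | x < p + q]] : {mpoly F[p + q]}).@[s]
   = (\prod_(x < p) s (lshift q x) ^+ (m1 (lshift q x)).-1) *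
     (\prod_(y < q) s (rshift p y) ^+ (m2 (rshift p y)).-1).
  rewrite mevalX big_split_ord /=.
  by congr (_ * _); apply: eq_bigr => x _; rewrite mnmE ?eL ?eR.
by case: A; case: B; rewrite /= ?mulr0 ?mul0r.
Qed.

Definition isY (g : {mpoly F[p + q]}) := all mY (msupp g).
Definition isZ (g : {mpoly F[p + q]}) := all mZ (msupp g).

Lemma rank_split gY gZ : isY gY -> isZ gZ -> (\rank (Lmx s (gY * gZ)) <= 1)%N.
Proof.
move=> /allP hY /allP hZ.
have -> : gY * gZ = \sum_(m1 <- msupp gY) \sum_(m2 <- msupp gZ)
    (gY@_m1 * gZ@_m2) *: 'X_[m1 + m2].
  rewrite [in LHS](mpolyE gY) [in LHS](mpolyE gZ) big_distrl /=.
  apply: eq_bigr => m1 _; rewrite big_distrr /=; apply: eq_bigr => m2 _.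
  by rewrite mpolyXD -scalerAl -scalerAr scalerA.
rewrite Lmx_sum big_seq.
have E : forall m1, m1 \in msupp gY ->
    Lmx s (\sum_(m2 <- msupp gZ) (gY@_m1 * gZ@_m2) *: 'X_[(m1 + m2)]) =
    (gY@_m1 *: uY m1) *m \sum_(m2 <- msupp gZ) (gZ@_m2 *: vZ m2).
  move=> m1 m1in; rewrite Lmx_sum mulmx_sumr big_seq [RHS]big_seq.
  apply: eq_bigr => m2 m2in.
  rewrite LmxZ LmxX wt_split ?hY ?hZ //.
  by rewrite -scalemxAl -scalemxAr scalerA.
rewrite (eq_bigr _ E) -big_seq.
rewrite -mulmx_suml; apply: leq_trans (mxrankM_maxl _ _) _.
exact: rank_leq_col.
Qed.

End Split.

Section Closure.
Variables (F : fieldType) (p q : nat).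
Implicit Types g h : {mpoly F[p + q]}.

Lemma isY1 : isY (1 : {mpoly F[p + q]}).
Proof. by rewrite /isY msupp1 /= andbT; apply/forallP => j; rewrite mnm0E. Qed.
Lemma isZ1 : isZ (1 : {mpoly F[p + q]}).
Proof. by rewrite /isZ msupp1 /= andbT; apply/forallP => j; rewrite mnm0E. Qed.
Lemma isY0 : isY (0 : {mpoly F[p + q]}).
Proof. by rewrite /isY msupp0. Qed.
Lemma isZ0 : isZ (0 : {mpoly F[p + q]}).
Proof. by rewrite /isZ msupp0. Qed.

Lemma isYD g h : isY g -> isY h -> isY (g + h).
Proof.
move=> /allP hg /allP hh; apply/allP => m /msuppD_le.
by rewrite mem_cat => /orP[/hg|/hh].
Qed.
Lemma isZD g h : isZ g -> isZ h -> isZ (g + h).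
Proof.
move=> /allP hg /allP hh; apply/allP => m /msuppD_le.
by rewrite mem_cat => /orP[/hg|/hh].
Qed.
Lemma isYZ c g : isY g -> isY (c *: g).
Proof. by move=> /allP hg; apply/allP => m /msuppZ_le /hg. Qed.
Lemma isZZ c g : isZ g -> isZ (c *: g).
Proof. by move=> /allP hg; apply/allP => m /msuppZ_le /hg. Qed.

Lemma isYM g h : isY g -> isY h -> isY (g * h).
Proof.
move=> /allP hg /allP hh; apply/allP => m /msuppM_le /allpairsP [[m1 m2] /= [i1 i2 ->]].
move: (hg _ i1) (hh _ i2) => /forallP e1 /forallP e2.
by apply/forallP => j; rewrite mnmDE (eqP (e1 j)) (eqP (e2 j)).
Qed.
Lemma isZM g h : isZ g -> isZ h -> isZ (g * h).
Proof.
move=> /allP hg /allP hh; apply/allP => m /msuppM_le /allpairsP [[m1 m2] /= [i1 i2 ->]].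
move: (hg _ i1) (hh _ i2) => /forallP e1 /forallP e2.
by apply/forallP => j; rewrite mnmDE (eqP (e1 j)) (eqP (e2 j)).
Qed.

Lemma isYX i : isY ('X_(lshift q i) : {mpoly F[p + q]}).
Proof.
rewrite /isY msuppX /= andbT; apply/forallP => j.
by rewrite mnm1E eq_lrshift.
Qed.
Lemma isZX j : isZ ('X_(rshift p j) : {mpoly F[p + q]}).
Proof.
rewrite /isZ msuppX /= andbT; apply/forallP => i.
by rewrite mnm1E eq_rlshift.
Qed.

Lemma isY_sum (I : Type) (r : seq I) (G : I -> {mpoly F[p + q]}) :
  (forall i, isY (G i)) -> isY (\sum_(i <- r) G i).
Proof.
move=> H; elim: r => [|x r IH]; first by rewrite big_nil isY0.
by rewrite big_cons isYD.
Qed.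
Lemma isZ_sum (I : Type) (r : seq I) (G : I -> {mpoly F[p + q]}) :
  (forall i, isZ (G i)) -> isZ (\sum_(i <- r) G i).
Proof.
move=> H; elim: r => [|x r IH]; first by rewrite big_nil isZ0.
by rewrite big_cons isZD.
Qed.

Lemma lin_split (l : linform F (p + q)) : l.1 = 0 ->
  lin_poly l = \sum_(x < p) l.2 (lshift q x) *: 'X_(lshift q x)
             + \sum_(y < q) l.2 (rshift p y) *: 'X_(rshift p y).
Proof. by move=> e; rewrite /lin_poly e mpolyC0 add0r big_split_ord. Qed.

Lemma prod_dec (P : seq (linform F (p + q))) :
  all (fun l : linform F (p + q) => l.1 == 0) P ->
  exists r : seq ({mpoly F[p + q]} * {mpoly F[p + q]}),
    [/\ size r = (2 ^ size P)%N, all (fun pr => isY pr.1 && isZ pr.2) r &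
        \prod_(l <- P) lin_poly l = \sum_(pr <- r) pr.1 * pr.2].
Proof.
elim: P => [|l P IH] /=.
  by exists [:: (1, 1)]; rewrite big_nil big_seq1 mulr1 /= isY1 isZ1.
case/andP => /eqP l0 /IH [r [sr ar er]].
pose lY := \sum_(x < p) l.2 (lshift q x) *: ('X_(lshift q x) : {mpoly F[p + q]}).
pose lZ := \sum_(y < q) l.2 (rshift p y) *: ('X_(rshift p y) : {mpoly F[p + q]}).
have hY : isY lY by apply: isY_sum => x; apply/isYZ/isYX.
have hZ : isZ lZ by apply: isZ_sum => x; apply/isZZ/isZX.
exists ([seq (lY * pr.1, pr.2) | pr <- r] ++ [seq (pr.1, lZ * pr.2) | pr <- r]).
split.
- by rewrite size_cat !size_map sr expnS mul2n addnn.
- rewrite all_cat !all_map; apply/andP; split; apply/allP => pr /(allP ar) /andP[h1 h2] /=.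
    by rewrite h2 andbT isYM.
  by rewrite h1 isZM.
- rewrite big_cons er lin_split // -/lY -/lZ big_cat !big_map /= mulrDl !big_distrr /=.
  by congr (_ + _); apply: eq_bigr => pr _; [rewrite mulrA | rewrite mulrCA].
Qed.

End Closure.

Lemma rank_sum_le1 (F : fieldType) m n (I : Type) (r : seq I) (M : I -> 'M[F]_(m, n)) :
  (forall i, (mxrank (M i) <= 1)%N) -> (mxrank (\sum_(i <- r) M i)%R <= size r)%N.
Proof.
move=> H; elim: r => [|x r IH]; first by rewrite big_nil mxrank0.
rewrite big_cons /=; apply: leq_trans (mxrank_add _ _) _.
by rewrite -add1n leq_add.
Qed.

Lemma rank_sum_le (F : fieldType) m n (I : Type) (r : seq I) (Pr : pred I)
  (M : I -> 'M[F]_(m, n)) c :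
  (forall i, Pr i -> (mxrank (M i) <= c)%N) ->
  (mxrank (\sum_(i <- r | Pr i) M i)%R <= size r * c)%N.
Proof.
move=> H; elim: r => [|x r IH]; first by rewrite big_nil mxrank0.
rewrite big_cons /= mulSn; case: ifP => Px.
  by apply: leq_trans (mxrank_add _ _) _; rewrite leq_add // H.
by apply: leq_trans IH _; rewrite leq_addl.
Qed.

Definition substl F n m (A : 'I_n -> 'I_m) (l : linform F n) : linform F m :=
  (l.1, [ffun y : 'I_m => \sum_(x < n | A x == y) l.2 x]).

Lemma sigma_lin F n m (A : 'I_n -> 'I_m) (l : linform F n) :
  comp_mpoly [tuple ('X_(A i) : {mpoly F[m]}) | i < n] (lin_poly l)
  = lin_poly (substl A l).
Proof.
rewrite /lin_poly /substl /= raddfD /= comp_mpolyC raddf_sum /=; congr (_ + _).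
rewrite (partition_big A predT) //=; apply: eq_bigr => y _.
rewrite ffunE scaler_suml; apply: eq_bigr => x /eqP <-.
by rewrite comp_mpolyZ comp_mpolyXU -tnth_nth tnth_mktuple.
Qed.

Lemma lin_homog F n (l : linform F n) : l.1 = 0 -> lin_poly l \is 1.-homog.
Proof.
move=> e; rewrite /lin_poly e mpolyC0 add0r.
apply: rpred_sum => x _; apply: rpredZ.
by rewrite dhomogX; apply/eqP; apply: mdeg1.
Qed.

Lemma prod_homog F n (P : seq (linform F n)) :
  all (fun l : linform F n => l.1 == 0) P ->
  \prod_(l <- P) lin_poly l \is (size P).-homog.
Proof.
elim: P => [|l P IH] /=; first by rewrite big_nil dhomog1.
case/andP => /eqP l0 /IH h; rewrite big_cons -add1n.
exact: dhomogM (lin_homog l0) h.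
Qed.

Lemma nd_sum (F : fieldType) n d (Phi : circuit F n) : homogeneous_circuit Phi ->
  all (fun m => mdeg m != d)
    (msupp (\sum_(P <- Phi | size P != d) \prod_(l <- P) lin_poly l)).
Proof.
elim: Phi => [|P Phi IH] /=; first by rewrite big_nil msupp0.
case/andP => hP /IH /allP hr; rewrite big_cons; case: ifP => sP; last exact/allP.
apply/allP => m /msuppD_le; rewrite mem_cat => /orP[|/hr //].
by move/(dhomog_mf (prod_homog hP)) => ->.
Qed.

Lemma gate_rank (F : fieldType) p q (s : 'I_(p + q) -> F) (P : seq (linform F (p + q))) :
  all (fun l : linform F (p + q) => l.1 == 0) P ->
  (\rank (Lmx s (\prod_(l <- P) lin_poly l)) <= 2 ^ size P)%N.
Proof.
case/prod_dec => r [sr ar ->]; rewrite Lmx_sum -sr.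
rewrite -(all_filterP ar) big_filter.
rewrite -[X in (_ <= X)%N]muln1 (all_filterP ar).
apply: rank_sum_le => pr /andP[h1 h2]; exact: rank_split.
Qed.

Lemma sigma_prod (F : fieldType) n m (A : 'I_n -> 'I_m) (P : seq (linform F n)) :
  comp_mpoly [tuple ('X_(A i) : {mpoly F[m]}) | i < n] (\prod_(l <- P) lin_poly l)
  = \prod_(l <- P) lin_poly (substl A l).
Proof.
rewrite rmorph_prod; apply: eq_bigr => l _; exact: sigma_lin.
Qed.

Unset Implicit Arguments.
Set Strict Implicit.

Theorem lemma1 (F : fieldType) (n : nat) (Phi : circuit F n) (k d : nat)
    (f : {mpoly F[n]}) :
  homogeneous_circuit Phi ->
  topfanin Phi = k ->
  circuit_poly Phi = f ->
  f \is d.-homog ->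
  forall (p q : nat) (A : 'I_n -> 'I_(p + q)) (s : 'I_(p + q) -> F),
    (\rank (coefmx_eval (circuit_poly (subst_circuit A Phi)) s) <= k * 2 ^ d)%N.
Proof.
move=> hom <- ef fh p q A s.
have H0 : \sum_(P <- Phi | size P != d) \prod_(l <- P) lin_poly l = 0.
  have hH : \sum_(P <- Phi | size P != d) \prod_(l <- P) lin_poly l \is d.-homog.
    have -> : \sum_(P <- Phi | size P != d) \prod_(l <- P) lin_poly l
        = f - \sum_(P <- Phi | size P == d) \prod_(l <- P) lin_poly l.
      rewrite -ef /circuit_poly [\sum_(P <- Phi) _](bigID (fun P => size P == d)) /=.
      by rewrite addrAC subrr add0r.
    apply: rpredB => //; rewrite big_seq_cond; apply: rpred_sum => P /andP[Pin /eqP <-].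
    exact/prod_homog/(allP hom).
  move: (nd_sum d hom) hH; rewrite dhomogE.
  set H := \sum_(P <- Phi | _) _ => /allP h1 /allP h2.
  apply/eqP; rewrite -msupp_eq0; case E: (msupp H) => [//|m r].
  have mi : m \in msupp H by rewrite E mem_head.
  by move: (h1 _ mi) (h2 _ mi) => /= /negbTE ->.
pose sg := comp_mpoly [tuple ('X_(A i) : {mpoly F[p + q]}) | i < n].
have E : circuit_poly (subst_circuit A Phi)
   = \sum_(P <- Phi | size P == d) \prod_(l <- P) lin_poly (substl A l).
  rewrite /circuit_poly /subst_circuit big_map (bigID (fun P => size P == d)) /=.
  have -> : \sum_(P <- Phi | size P != d)
     \prod_(l <- map (substl A) P) lin_poly l = 0.
    transitivity (sg (\sum_(P <- Phi | size P != d) \prod_(l <- P) lin_poly l));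
      last by rewrite H0 /sg comp_mpoly0.
    rewrite /sg raddf_sum; apply: eq_bigr => P _.
    by rewrite big_map; symmetry; apply: sigma_prod.
  by rewrite addr0; apply: eq_bigr => P _; rewrite big_map.
rewrite coefmx_evalE E Lmx_sum big_seq_cond.
apply: rank_sum_le => P /andP[Pin /eqP sP].
have := gate_rank s (P := map (substl A) P).
rewrite big_map size_map sP; apply.
by rewrite all_map; apply/allP => l /(allP (allP hom P Pin)).
Qed.
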